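(* Let $n\ge1$ and let $c:E_n\to\mathbb C$ be an admissible edge weighting of $Q_n$ with $c(ij)\ne0$ for all $ij\in E_n$. Then there is $\mathbf t\in\Delta_{n-1}$ such that the representation $\rho_c$ is unitarily equivalent to $\rho_{\mathbf t}$.
   Context: For $n\ge1$, identify integers $0\le i<2^n$ with their $n$-digit binary representations $i=\sum_k i_k2^k$; $\mathrm{par}_k(i)=\sum_{r=0}^k i_r\bmod2$, and $i\#k$ is $i$ with its $k$-th digit flipped. The hypercube $Q_n$ has vertex classes $U_n=\{i\mid\mathrm{par}_{n-1}(i)=0\}$, $V_n=\{j\mid\mathrm{par}_{n-1}(j)=1\}$ and edge set $E_n$ of pairs $ij$ ($i\in U_n$, $j\in V_n$, $j=i\#k$ for some $k<n$); $\mathcal N(x)$ denotes neighbors. $C^\ast(Q_n)$ is the universal unital C*-algebra generated by projections $p_x$ with $\sum_{u\in U_n}p_u=1=\sum_{v\in V_n}p_v$ and $p_up_v=0$ for non-adjacent $u,v$. A weighting $c:E_n\to\mathbb C$ (with $c(ij):=0$ for non-adjacent $i,j$) is admissible if $\sum_{i\in\mathcal N(j_1)\cap\mathcal N(j_2)}c(ij_1)\overline{c(ij_2)}=\delta_{j_1j_2}$ for all $j_1,j_2\in V_n(c)$ and $\sum_{j\in\mathcal N(i_1)\cap\mathcal N(i_2)}c(i_1j)\overline{c(i_2j)}=\delta_{i_1i_2}$ for all $i_1,i_2\in U_n(c)$, where $U_n(c),V_n(c)$ are the vertices incident to some edge of nonzero weight. For such $c$, $\rho_c:C^\ast(Q_n)\to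 M_{U_n(c)}$ is the representation with $\rho_c(p_i)=E_{ii}$ ($i\in U_n(c)$), $\rho_c(p_j)=[c(i_1j)\overline{c(i_2j)}]_{i_1,i_2\in U_n(c)}$ ($j\in V_n(c)$), $\rho_c(p_x)=0$ otherwise. $\Delta_{n-1}=\{[t_0,\dots,t_{n-1}]\mid t_k\ge0,\sum t_k=1\}$; for $\mathbf t\in\Delta_{n-1}$, $c_{\mathbf t}(ij)=(-1)^{\mathrm{par}_k(i)}\sqrt{t_k}$ for $i\in U_n$, $j=i\#k$, and $\rho_{\mathbf t}:C^\ast(Q_n)\to M_{U_n}$ is the representation with $\rho_{\mathbf t}(p_i)=E_{ii}$, $\rho_{\mathbf t}(p_j)=[c_{\mathbf t}(i_1j)\overline{c_{\mathbf t}(i_2j)}]_{i_1,i_2\in U_n}$. *)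

(* Defs.v *)
(* vertices of Q_n are 'I_(2^n); complex numbers are R[i] for R : realType *)
From HB Require Import structures.
From mathcomp Require Import all_boot all_order all_algebra.
From mathcomp Require Import complex.
From mathcomp Require Import reals.
Set Implicit Arguments. Unset Strict Implicit. Unset Printing Implicit Defensive.
Import Order.TTheory GRing.Theory Num.Theory.
Local Open Scope ring_scope.

Definition bit (i k : nat) : nat := odd (i %/ 2 ^ k).
Definition par (k i : nat) : bool := odd (\sum_(r < k.+1) bit i r).
Definition flip (i k : nat) : nat := if odd (i %/ 2 ^ k) then (i - 2 ^ k)%N else (i + 2 ^ k)%N.

Section Hypercube.
Variable n : nat.
Notation vert := 'I_(2 ^ n).

Definition inU (x : vert) : bool := ~~ par n.-1 x.
Definition inV (x : vert) : bool := par n.-1 x.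
Definition Uset : {set vert} := [set x | inU x].
Definition Vset : {set vert} := [set x | inV x].
Definition edge (i j : vert) : bool :=
  [&& inU i, inV j & [exists k : 'I_n, (j : nat) == flip i k]].
Definition nbr (x : vert) : {set vert} := [set y | edge x y || edge y x].

Variable R : realType.
Local Notation C := R[i].

(* a weighting is given by its values on edges; c(ij) := 0 for non-adjacent i, j *)
Definition cext (c : vert -> vert -> C) (i j : vert) : C := if edge i j then c i j else 0.

Definition Uc (c : vert -> vert -> C) : {set vert} :=
  [set i | inU i && [exists j, edge i j && (c i j != 0)]].
Definition Vc (c : vert -> vert -> C) : {set vert} :=
  [set j | inV j && [exists i, edge i j && (c i j != 0)]].

Definition admissible (c : vert -> vert -> C) : Prop :=
  (forall j1 j2, j1 \in Vc c -> j2 \in Vc c ->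
     \sum_(i in nbr j1 :&: nbr j2) cext c i j1 * conjc (cext c i j2) = (j1 == j2)%:R)
  /\ (forall i1 i2, i1 \in Uc c -> i2 \in Uc c ->
     \sum_(j in nbr i1 :&: nbr i2) cext c i1 j * conjc (cext c i2 j) = (i1 == i2)%:R).

(* matrices indexed by a finite set A of vertices: 'M_#|A|, entry (a,b) <-> (enum_val a, enum_val b) *)
Definition Emx (A : {set vert}) (x : vert) : 'M[C]_#|A| :=
  \matrix_(a, b) ((enum_val a == x) && (enum_val b == x))%:R.

(* rho_c : C*(Q_n) -> M_{U_n(c)}, given on the generators p_x *)
Definition rho_c (c : vert -> vert -> C) (x : vert) : 'M[C]_#|Uc c| :=
  if x \in Uc c then Emx (Uc c) x
  else if x \in Vc c then
    \matrix_(a, b) (cext c (enum_val a) x * conjc (cext c (enum_val b) x))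
  else 0.

Definition inDelta (t : 'I_n -> R) : Prop :=
  (forall k, 0 <= t k) /\ \sum_(k < n) t k = 1.

Definition c_t (t : 'I_n -> R) (i j : vert) : C :=
  if edge i j then
    match [pick k : 'I_n | (j : nat) == flip i k] with
    | Some k => (-1) ^+ par k i * Complex (Num.sqrt (t k)) 0
    | None => 0
    end
  else 0.

Definition rho_t (t : 'I_n -> R) (x : vert) : 'M[C]_#|Uset| :=
  if x \in Uset then Emx Uset x
  else \matrix_(a, b) (c_t t (enum_val a) x * conjc (c_t t (enum_val b) x)).

Definition adjmx (p q : nat) (M : 'M[C]_(p, q)) : 'M[C]_(q, p) := (map_mx conjc M)^T.

(* unitary equivalence of two representations of C*(Q_n), given by their
   values on the generators p_x (which determine a representation) *)
Definition unitarily_equiv (p q : nat) (rho1 : vert -> 'M[C]_p) (rho2 : vert -> 'M[C]_q) : Prop :=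
  exists W : 'M[C]_(q, p),
    W *m adjmx W = 1%:M /\ adjmx W *m W = 1%:M /\
    forall x : vert, W *m rho1 x *m adjmx W = rho2 x.

End Hypercube.

(* Main.v *)
Require Import Defs.
From HB Require Import structures.
From mathcomp Require Import all_boot all_order all_algebra.
From mathcomp Require Import complex.
From mathcomp Require Import reals.
From mathcomp Require Import zify ring lra.
Import Order.TTheory GRing.Theory Num.Theory.
Import ComplexField.Normc.
Set Implicit Arguments. Unset Strict Implicit. Unset Printing Implicit Defensive.

Definition bb (i k : nat) : bool := odd (i %/ 2 ^ k).

Lemma bb0 i : bb i 0 = odd i.
Proof. by rewrite /bb expn0 divn1. Qed.

Lemma bbS i r : bb i r.+1 = bb i./2 r.
Proof. by rewrite /bb expnS divnMA divn2. Qed.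

Lemma bits_inj x y : (forall r, bb x r = bb y r) -> x = y.
Proof.
move=> H.
suff: forall m x y, x < 2 ^ m -> y < 2 ^ m -> (forall r, bb x r = bb y r) -> x = y.
  move/(_ (x + y) x y); apply => //.
    apply: leq_ltn_trans (ltn_expl _ (isT : 1 < 2)); exact: leq_addr.
  apply: leq_ltn_trans (ltn_expl _ (isT : 1 < 2)); exact: leq_addl.
clear x y H; elim=> [|m IH] x y.
  by rewrite expn0 !ltnS !leqn0 => /eqP-> /eqP->.
move=> hx hy H.
rewrite -(odd_double_half x) -(odd_double_half y).
have -> : odd x = odd y by rewrite -!bb0 H.
congr (_ + _.*2); apply: IH.
- move: hx; rewrite expnS; lia.
- move: hy; rewrite expnS; lia.
- by move=> r; rewrite -!bbS.
Qed.

Lemma bb_add i k : ~~ bb i k -> forall r, bb (i + 2 ^ k) r = bb i r (+) (r == k).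
Proof.
elim: k i => [|k IH] i hi r.
  rewrite bb0 in hi.
  case: r => [|r]; first by rewrite !bb0 expn0 oddD /= addbT.
  rewrite !bbS /= addbF; congr bb.
  have E : i = i./2.*2 by rewrite -{1}(odd_double_half i) (negbTE hi).
  rewrite expn0 {1}E; lia.
rewrite bbS in hi.
case: r => [|r]; first by rewrite !bb0 oddD oddX /= addbF.
rewrite !bbS eqSS -IH //; congr bb.
rewrite expnS; lia.
Qed.

Lemma bb_flip i k r : bb (flip i k) r = bb i r (+) (r == k).
Proof.
rewrite /flip -/(bb i k); case Hk: (bb i k); last by rewrite bb_add // Hk.
have hle : 2 ^ k <= i.
  rewrite -(@divn_gt0 (2 ^ k)) ?expn_gt0 //; move: Hk; rewrite /bb.
  by case: (i %/ 2 ^ k).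
have [i' Ei] : exists i', i = i' + 2 ^ k by exists (i - 2 ^ k); rewrite subnK.
have Hk' : ~~ bb i' k.
  move: Hk; rewrite /bb Ei -{1}(mul1n (2 ^ k)) divnDMl ?expn_gt0 //.
  by rewrite addn1 /=; case: odd.
by rewrite Ei addnK bb_add // addbK.
Qed.


Lemma lt_bitsP x m : x < 2 ^ m -> forall r, m <= r -> bb x r = false.
Proof.
move=> hx r hr; rewrite /bb divn_small //.
apply: leq_trans hx _; exact: leq_pexp2l.
Qed.

Lemma bits_lt x m : (forall r, m <= r -> bb x r = false) -> x < 2 ^ m.
Proof.
move=> H.
have q0 : x %/ 2 ^ m = 0.
  apply: bits_inj => s; rewrite /bb div0n /= -divnMA -expnD.
  by have := H (m + s) (leq_addr _ _); rewrite /bb.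
by rewrite (divn_eq x (2 ^ m)) q0 mul0n add0n ltn_pmod ?expn_gt0.
Qed.

Lemma flip_lt i k m : i < 2 ^ m -> k < m -> flip i k < 2 ^ m.
Proof.
move=> hi hk; apply: bits_lt => r hr.
rewrite bb_flip (lt_bitsP hi hr) /=.
by apply/eqP => E; move: hk; rewrite -E ltnNge hr.
Qed.

Lemma flipK i k : flip (flip i k) k = i.
Proof. by apply: bits_inj => r; rewrite !bb_flip addbK. Qed.

Lemma flipC i k l : flip (flip i k) l = flip (flip i l) k.
Proof. by apply: bits_inj => r; rewrite !bb_flip addbAC. Qed.

Lemma flip_inj i k l : flip i k = flip i l -> k = l.
Proof.
move/(congr1 (bb ^~ k)); rewrite !bb_flip eqxx.
by case: (bb i k) => /=; case: eqP => // _ /negbT /=.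
Qed.

Lemma flip_face x a b k l : k != l -> flip x a = flip (flip (flip x k) l) b ->
  (a == k) && (b == l) || (a == l) && (b == k).
Proof.
move=> hkl E.
have H r : (r == a) = (r == k) (+) (r == l) (+) (r == b).
  have := congr1 (bb ^~ r) E; rewrite /= !bb_flip.
  by case: (bb x r); case: (r == a); case: (r == k); case: (r == l); case: (r == b).
have Hk := H k; have Hl := H l.
rewrite eqxx (negbTE hkl) in Hk; rewrite eqxx [l == k]eq_sym (negbTE hkl) in Hl.
rewrite ![a == _]eq_sym ![b == _]eq_sym.
have e1 : ~~ ((k == a) && (l == a)).
  by apply/andP => [[/eqP <- /eqP E']]; rewrite E' eqxx in hkl.
have e2 : ~~ ((k == b) && (l == b)).
  by apply/andP => [[/eqP <- /eqP E']]; rewrite E' eqxx in hkl.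
move: Hk Hl e1 e2; case: (k == a); case: (l == a); case: (k == b); case: (l == b) => //.
Qed.

Lemma par_flip m i k : par m (flip i k) = par m i (+) (k <= m).
Proof.
rewrite /par; case: (leqP k m) => hk.
  have hk' : k < m.+1 by [].
  rewrite (bigD1 (Ordinal hk')) //= [in RHS](bigD1 (Ordinal hk')) //=.
  rewrite !oddD.
  have -> : \sum_(i0 < m.+1 | i0 != Ordinal hk') bit (flip i k) i0 =
            \sum_(i0 < m.+1 | i0 != Ordinal hk') bit i i0.
    apply: eq_bigr => r hr; rewrite /bit -!/(bb _ _) bb_flip.
    suff -> : (nat_of_ord r == k) = false by rewrite addbF.
    by apply/negbTE; move: hr; apply: contra => /eqP E; apply/eqP/val_inj.
  rewrite /bit -!/(bb _ _) bb_flip eqxx !oddb.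
  by case: (bb i k); case: (odd _).
rewrite addbF; congr odd; apply: eq_bigr => r _.
rewrite /bit -!/(bb _ _) bb_flip.
suff -> : (nat_of_ord r == k) = false by rewrite addbF.
apply/negbTE; apply/eqP => E; move: (ltn_ord r); rewrite E ltnS leqNgt hk //.
Qed.

Lemma bb_mod x m r : bb (x %% 2 ^ m) r = (r < m) && bb x r.
Proof.
case: (ltnP r m) => hr /=; last first.
  by apply: lt_bitsP hr; rewrite ltn_pmod ?expn_gt0.
have E : 2 ^ m = 2 ^ (m - r) * 2 ^ r by rewrite -expnD subnK // ltnW.
rewrite /bb [in RHS](divn_eq x (2 ^ m)) [in RHS]E mulnA addnC divnDMl ?expn_gt0 //.
rewrite oddD oddM oddX subn_eq0 leqNgt hr /=.
by rewrite andbF addbF -E.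
Qed.

Lemma mod_step1 x m : bb x m -> x %% 2 ^ m.+1 = flip (x %% 2 ^ m) m.
Proof.
move=> h; apply: bits_inj => r; rewrite bb_flip !bb_mod ltnS.
by case: (ltngtP r m) => [hr|hr|->] /=; rewrite ?addbF ?h.
Qed.

Lemma mod_step0 x m : ~~ bb x m -> x %% 2 ^ m.+1 = x %% 2 ^ m.
Proof.
move=> h; apply: bits_inj => r; rewrite !bb_mod ltnS.
case: (ltngtP r m) => [hr|hr|->] //=; by rewrite (negbTE h).
Qed.

Lemma mod_flip_gt x k m : k < m -> flip x k %% 2 ^ m = flip (x %% 2 ^ m) k.
Proof.
move=> hk; apply: bits_inj => r; rewrite bb_flip !bb_mod bb_flip.
case: (ltnP r m) => hr //=.
suff -> : (r == k) = false by [].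
by apply/negbTE; apply: contraTneq hr => ->; rewrite -ltnNge.
Qed.

Lemma mod_flip_le x k m : m <= k -> flip x k %% 2 ^ m = x %% 2 ^ m.
Proof.
move=> hk; apply: bits_inj => r; rewrite !bb_mod bb_flip.
case: (ltnP r m) => hr //=.
suff -> : (r == k) = false by rewrite addbF.
by apply/negbTE; apply: contraTneq hr => ->; rewrite -leqNgt.
Qed.

Lemma mod_full x m : x < 2 ^ m -> x %% 2 ^ m = x.
Proof. exact: modn_small. Qed.

Lemma nz_bit x : x != 0 -> exists r, bb x r.
Proof.
move=> hx; case: (pickP (fun r : 'I_(x.+1) => bb x r)) => [r hr|H]; first by exists r.
case/negP: hx; apply/eqP; apply: bits_inj => r.
rewrite /bb div0n /=.
case: (ltnP r x.+1) => hr; first by have := H (Ordinal hr).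
apply: lt_bitsP (ltnW hr).
exact: ltn_expl.
Qed.

Lemma flip_lt_self x l : bb x l -> flip x l < x.
Proof.
move=> h; rewrite /flip -/(bb x l) h ltn_subrL expn_gt0 /=.
case: x h => //; by rewrite /bb div0n.
Qed.

Section Cube.
Variable n : nat.
Local Notation vert := 'I_(2 ^ n).

Definition fl (x : vert) (k : 'I_n) : vert := Ordinal (flip_lt (ltn_ord x) (ltn_ord k)).

Lemma flK (x : vert) (k : 'I_n) : fl (fl x k) k = x.
Proof. by apply: val_inj; rewrite /= flipK. Qed.

Lemma flC (x : vert) (k l : 'I_n) : fl (fl x k) l = fl (fl x l) k.
Proof. by apply: val_inj; rewrite /= flipC. Qed.

Lemma fl_inj (x : vert) (k l : 'I_n) : fl x k = fl x l -> k = l.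
Proof. by move/(congr1 val) => /= /flip_inj E; apply: val_inj. Qed.

Lemma inU_fl (x : vert) (k : 'I_n) : inU (fl x k) = ~~ inU x.
Proof.
rewrite /inU /= par_flip.
have -> : (k <= n.-1)%N by have := ltn_ord k; lia.
by case: par.
Qed.

Lemma inVE (x : vert) : inV x = ~~ inU x.
Proof. by rewrite /inV /inU negbK. Qed.

Lemma edge_fl (i : vert) (k : 'I_n) : edge i (fl i k) = inU i.
Proof.
rewrite /edge inVE inU_fl negbK andbA andbb.
case: (inU i) => //=; apply/existsP; exists k; by [].
Qed.

Lemma edgeP (i j : vert) : edge i j -> inU i /\ exists k, j = fl i k.
Proof.
case/and3P => hi _ /existsP [k /eqP hk]; split => //; exists k; exact: val_inj.
Qed.

Lemma fl_face (x y z : vert) (k l a b : 'I_n) : k != l -> y = fl (fl x k) l -> z = fl x a -> z = fl y b ->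
  z = fl x k \/ z = fl x l.
Proof.
move=> hkl -> E1 E2.
have := @flip_face x a b k l hkl.
move: (congr1 val E1) (congr1 val E2) => /= <- -> /(_ erefl).
case/orP => /andP [/eqP ha _]; [left|right]; rewrite E1; congr fl; exact: val_inj.
Qed.

Lemma fl_ne (x : vert) (k l : 'I_n) : k != l -> fl x k != fl x l.
Proof. by move=> h; apply: contra h => /eqP /fl_inj ->. Qed.

Lemma fl2_ne (x : vert) (k l : 'I_n) : k != l -> fl (fl x k) l != x.
Proof.
move=> h; apply: contra h => /eqP E.
have := congr1 (fl ^~ l) E; rewrite /= flK => E'; apply/eqP; exact: fl_inj E'.
Qed.

Lemma pow2_gt0 : (0 < 2 ^ n)%N.
Proof. by rewrite expn_gt0. Qed.

Definition v0 : vert := Ordinal pow2_gt0.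

Lemma inU_v0 : inU v0.
Proof. by rewrite /inU /par big1 // => r _; rewrite /bit div0n. Qed.

End Cube.

Section Core.
Local Open Scope ring_scope.
Local Open Scope complex_scope.
Variable n : nat.
Local Notation vert := 'I_(2 ^ n).
Variable R : realType.
Local Notation C := R[i].
Variable c : vert -> vert -> C.
Hypothesis hadm : admissible c.
Hypothesis hnz : forall i j : vert, edge i j -> c i j != 0.
Hypothesis hn : (0 < n)%N.

Let k0 : 'I_n := Ordinal hn.

Lemma UcE : Uc c = Uset n.
Proof.
apply/setP => i; rewrite !inE; case hi: (inU i) => //=.
apply/existsP; exists (fl i k0); rewrite edge_fl hi /=; apply: hnz; by rewrite edge_fl.
Qed.

Lemma VcE : Vc c = Vset n.
Proof.
apply/setP => j; rewrite !inE; case hj: (inV j) => //=.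
apply/existsP; exists (fl j k0).
have he : edge (fl j k0) j by rewrite -{2}(flK j k0) edge_fl inU_fl -inVE.
by rewrite he hnz.
Qed.

Lemma cext_e (i j : vert) k : inU i -> j = fl i k -> cext c i j = c i j.
Proof. by move=> hi ->; rewrite /cext edge_fl hi. Qed.

Lemma cext_nz (i j : vert) : cext c i j != 0 -> edge i j.
Proof. by rewrite /cext; case: (edge i j) => //; rewrite eqxx. Qed.

Lemma sum_nbrU (i1 i2 : vert) :
  \sum_(j in nbr i1 :&: nbr i2) cext c i1 j * conjc (cext c i2 j) =
  \sum_j cext c i1 j * conjc (cext c i2 j).
Proof.
rewrite [RHS](bigID (mem (nbr i1 :&: nbr i2))) /= [X in _ + X]big1 ?addr0 // => j.
rewrite !inE negb_and => /orP [] /norP [h _]; rewrite /cext (negbTE h).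
  by rewrite mul0r.
by rewrite conjc0 mulr0.
Qed.

Lemma sum_nbrV (j1 j2 : vert) :
  \sum_(i in nbr j1 :&: nbr j2) cext c i j1 * conjc (cext c i j2) =
  \sum_i cext c i j1 * conjc (cext c i j2).
Proof.
rewrite [RHS](bigID (mem (nbr j1 :&: nbr j2))) /= [X in _ + X]big1 ?addr0 // => i.
rewrite !inE negb_and => /orP [] /norP [_ h]; rewrite /cext (negbTE h).
  by rewrite mul0r.
by rewrite conjc0 mulr0.
Qed.

Lemma sum2 (x : vert) (k l : 'I_n) (F : vert -> C) : k != l ->
  (forall z, F z != 0 -> exists a b, z = fl x a /\ z = fl (fl (fl x k) l) b) ->
  \sum_z F z = F (fl x k) + F (fl x l).
Proof.
move=> hkl H.
rewrite (bigD1 (fl x k)) //= (bigD1 (fl x l)) /=; last by rewrite fl_ne // eq_sym.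
rewrite big1 ?addr0 ?addrA // => z /andP [h1 h2].
apply/eqP; apply: contraLR isT => /H [a [b [E1 E2]]].
by case: (fl_face hkl erefl E1 E2) => E; rewrite -E eqxx ?andbF in h1 h2 *.
Qed.

Lemma R1 (i1 : vert) (k l : 'I_n) : inU i1 -> k != l ->
  c i1 (fl i1 k) * conjc (c (fl (fl i1 k) l) (fl i1 k)) +
  c i1 (fl i1 l) * conjc (c (fl (fl i1 k) l) (fl i1 l)) = 0.
Proof.
move=> hi hkl.
have hi2 : inU (fl (fl i1 k) l) by rewrite !inU_fl negbK.
have := hadm.2 i1 (fl (fl i1 k) l).
rewrite UcE !inE hi hi2 eq_sym (negbTE (fl2_ne _ hkl)) sum_nbrU => /(_ isT isT).
rewrite (@sum2 i1 k l (fun j => cext c i1 j * conjc (cext c (fl (fl i1 k) l) j)) hkl) /=.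
  rewrite (cext_e hi erefl) (cext_e hi erefl).
  rewrite (@cext_e _ _ l hi2); last by rewrite flK.
  by rewrite (@cext_e _ _ k hi2) // [fl (fl (fl i1 k) l) k]flC flK.
move=> z /=; rewrite mulf_eq0 negb_or conjc_eq0 => /andP [/cext_nz h1 /cext_nz h2].
case: (edgeP h1) => _ [a E1]; case: (edgeP h2) => _ [b E2]; by exists a, b.
Qed.

Lemma R2 (i1 : vert) (k l : 'I_n) : inU i1 -> k != l ->
  c i1 (fl i1 k) * conjc (c i1 (fl i1 l)) +
  c (fl (fl i1 k) l) (fl i1 k) * conjc (c (fl (fl i1 k) l) (fl i1 l)) = 0.
Proof.
move=> hi hkl.
have hi2 : inU (fl (fl i1 k) l) by rewrite !inU_fl negbK.
have hj1 : inV (fl i1 k) by rewrite inVE inU_fl negbK.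
have hj2 : inV (fl i1 l) by rewrite inVE inU_fl negbK.
have := hadm.1 (fl i1 k) (fl i1 l).
rewrite VcE !inE hj1 hj2 (negbTE (fl_ne _ hkl)) sum_nbrV => /(_ isT isT).
rewrite (@sum2 (fl i1 k) k l (fun i => cext c i (fl i1 k) * conjc (cext c i (fl i1 l))) hkl) /=.
  rewrite flK (cext_e hi erefl) (cext_e hi erefl).
  rewrite (@cext_e _ _ l hi2); last by rewrite flK.
  by rewrite (@cext_e _ _ k hi2) // [fl (fl (fl i1 k) l) k]flC flK.
move=> z /=; rewrite mulf_eq0 negb_or conjc_eq0 => /andP [/cext_nz h1 /cext_nz h2].
case: (edgeP h1) => _ [a E1]; case: (edgeP h2) => _ [b E2].
exists a, b; split; first by rewrite E1 flK.
by rewrite flK E2 flK.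
Qed.

Definition cu (x : vert) (k : 'I_n) : C := if inU x then c x (fl x k) else c (fl x k) x.

Lemma cu_fl (x : vert) k : cu (fl x k) k = cu x k.
Proof. by rewrite /cu inU_fl flK; case: (inU x). Qed.

Lemma cu_nz (x : vert) k : cu x k != 0.
Proof.
rewrite /cu; case hx: (inU x); apply: hnz; first by rewrite edge_fl.
by rewrite -{2}(flK x k) edge_fl inU_fl hx.
Qed.

Lemma normc_conj (z : C) : normc (conjc z) = normc z.
Proof. by case: z => a b; rewrite /= sqrrN. Qed.

Lemma normc_gt0 (z : C) : z != 0 -> 0 < normc z.
Proof.
move=> hz; rewrite lt_def; apply/andP; split.
  by apply/eqP => /eq0_normc E; rewrite E eqxx in hz.
by case: z {hz} => a b; rewrite /= sqrtr_ge0.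
Qed.

Lemma mod_face (i1 : vert) (k l : 'I_n) : inU i1 -> k != l ->
  normc (cu i1 k) = normc (cu (fl i1 l) k) /\ normc (cu i1 l) = normc (cu (fl i1 k) l).
Proof.
move=> hi hkl.
have h1 := R1 hi hkl; have h2 := R2 hi hkl.
have Ea : cu i1 k = c i1 (fl i1 k) by rewrite /cu hi.
have Ed : cu i1 l = c i1 (fl i1 l) by rewrite /cu hi.
have Eb : cu (fl i1 k) l = c (fl (fl i1 k) l) (fl i1 k) by rewrite /cu inU_fl hi.
have Ee : cu (fl i1 l) k = c (fl (fl i1 k) l) (fl i1 l) by rewrite /cu inU_fl hi flC.
rewrite -Ea -Eb -Ed -Ee in h1 h2.
have na := normc_gt0 (cu_nz i1 k); have nb := normc_gt0 (cu_nz (fl i1 k) l).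
have nd := normc_gt0 (cu_nz i1 l); have ne := normc_gt0 (cu_nz (fl i1 l) k).
move: h1 h2 na nb nd ne.
set a := cu i1 k; set b := cu (fl i1 k) l; set d := cu i1 l; set e := cu (fl i1 l) k.
move=> /eqP; rewrite addr_eq0 => /eqP /(congr1 (@normc R)); rewrite normcN !normcM !normc_conj => h1.
move=> /eqP; rewrite addr_eq0 => /eqP /(congr1 (@normc R)); rewrite normcN !normcM !normc_conj => h2.
move=> na nb nd ne.
have hbd : normc d = normc b.
  have : (normc d ^+ 2 - normc b ^+ 2) * normc e = 0.
    by rewrite mulrBl !expr2 -!mulrA -h1 -h2; ring.
  move/eqP; rewrite mulf_eq0 (gt_eqF ne) orbF subr_eq0 eqrXn2 ?ltW // => /eqP.
  done.
split => //.
apply: (@mulIf _ (normc b)); first by rewrite gt_eqF.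
by rewrite h1 hbd mulrC.
Qed.

Lemma mod_flip (x : vert) (k l : 'I_n) : k != l ->
  normc (cu x k) = normc (cu (fl x l) k).
Proof.
move=> hkl; case hx: (inU x); first by case: (mod_face hx hkl).
have hy : inU (fl x l) by rewrite inU_fl hx.
by case: (mod_face hy hkl); rewrite flK.
Qed.

Lemma mod_const (x : vert) (k : 'I_n) : normc (cu x k) = normc (cu (v0 n) k).
Proof.
suff H : forall m (x : vert), (x < m)%N -> normc (cu x k) = normc (cu (v0 n) k).
  exact: (H (x.+1)).
elim=> [//|m IH] {}x hx.
have [x0|xnz] := eqVneq (x : nat) 0%N.
  by congr (normc (cu _ k)); apply: val_inj.
case: (nz_bit xnz) => r hr.
have rn : (r < n)%N.
  rewrite ltnNge; apply/negP => hnr.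
  by rewrite (lt_bitsP (ltn_ord x) hnr) in hr.
set l : 'I_n := Ordinal rn.
have hlt : (fl x l < m)%N.
  by apply: leq_trans (flip_lt_self hr) _; rewrite -ltnS.
have [ekl|nkl] := eqVneq k l.
  by rewrite -(cu_fl x k) IH // ekl.
by rewrite (mod_flip x nkl) IH.
Qed.

Lemma mul_conj (z : C) : z * conjc z = (normc z ^+ 2)%:C.
Proof.
case: z => a b; rewrite /= sqr_sqrtr ?addr_ge0 ?sqr_ge0 //.
by apply/eqP; rewrite eq_complex /=; apply/andP; split; apply/eqP; ring.
Qed.

Lemma sum_fl (x : vert) (F : vert -> C) : (forall j, ~~ edge x j -> F j = 0) ->
  \sum_j F j = \sum_k F (fl x k).
Proof.
move=> H.
rewrite (bigID (mem (fl x @: setT))) /= [X in _ + X]big1 ?addr0.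
  rewrite big_imset /=; first by apply: eq_bigl => k; rewrite in_setT.
  by move=> a b _ _; exact: fl_inj.
move=> j hj; apply: H; apply: contra hj => he.
case: (edgeP he) => _ [k ->]; apply/imsetP; exists k => //; exact: in_setT.
Qed.

Definition rho (k : 'I_n) : R := normc (cu (v0 n) k).
Definition tt (k : 'I_n) : R := rho k ^+ 2.

Lemma sum_t : \sum_k tt k = 1.
Proof.
have := hadm.2 (v0 n) (v0 n); rewrite UcE !inE inU_v0 eqxx sum_nbrU => /(_ isT isT).
rewrite (@sum_fl (v0 n)) => [|j hj]; last by rewrite /cext (negbTE hj) mul0r.
under eq_bigr => k _ do rewrite (cext_e (inU_v0 n) erefl) mul_conj.
rewrite -rmorph_sum -(rmorph1 (real_complex R)) => /(@complexI R) <-.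
by apply: eq_bigr => k _; rewrite /tt /rho /cu inU_v0.
Qed.

Lemma rho_gt0 k : 0 < rho k.
Proof. exact: normc_gt0 (cu_nz _ _). Qed.

Lemma rho_ge0 k : 0 <= rho k.
Proof. exact: ltW (rho_gt0 k). Qed.

Lemma normc_c (i : vert) k : inU i -> normc (c i (fl i k)) = rho k.
Proof. by move=> hi; rewrite /rho -(mod_const i) /cu hi. Qed.

Lemma ct_fl (i : vert) k : inU i -> c_t tt i (fl i k) = (-1) ^+ par k i * (rho k)%:C.
Proof.
move=> hi; rewrite /c_t edge_fl hi; case: pickP => [k' /eqP hk' | H].
  have E : k' = k by apply: (@fl_inj _ i); apply: val_inj; rewrite /= -hk'.
  by rewrite E /tt sqrtr_sqr ger0_norm // rho_ge0.
by have := H k; rewrite eqxx.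
Qed.

Lemma ct_conj (i : vert) k : inU i -> conjc (c_t tt i (fl i k)) = c_t tt i (fl i k).
Proof. by move=> hi; rewrite ct_fl // rmorphM rmorph_sign /= oppr0. Qed.

Lemma ct_nz (i : vert) k : inU i -> c_t tt i (fl i k) != 0.
Proof.
move=> hi; rewrite ct_fl // mulf_eq0 signr_eq0 /= -(rmorph0 (real_complex R)).
by rewrite (inj_eq (@complexI R)) gt_eqF // rho_gt0.
Qed.

Lemma ct_norm (i : vert) k : inU i ->
  c_t tt i (fl i k) * conjc (c_t tt i (fl i k)) = c i (fl i k) * conjc (c i (fl i k)).
Proof.
move=> hi; rewrite [RHS]mul_conj normc_c // ct_conj // ct_fl // mulrACA -expr2 sqrr_sign mul1r.
by rewrite -rmorphM expr2.
Qed.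

Lemma ct_face (i1 : vert) (k l : 'I_n) : inU i1 -> k != l ->
  c_t tt i1 (fl i1 k) * c_t tt (fl (fl i1 k) l) (fl (fl (fl i1 k) l) l) +
  c_t tt i1 (fl i1 l) * c_t tt (fl (fl i1 k) l) (fl (fl (fl i1 k) l) k) = 0.
Proof.
move=> hi hkl.
have hi2 : inU (fl (fl i1 k) l) by rewrite !inU_fl negbK.
rewrite !ct_fl //= !par_flip !leqnn.
have hb : (l <= k)%N = ~~ (k <= l)%N.
  case: (ltngtP k l) => // h.
  by move: hkl; rewrite -(inj_eq val_inj) /= h eqxx.
rewrite hb !signr_addb !signrN !expr1.
ring.
Qed.

Lemma conjcM (x y : C) : conjc (x * y) = conjc x * conjc y.
Proof. exact: rmorphM. Qed.

Definition ctv (y : vert) k := c_t tt y (fl y k).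

Definition g (x : vert) (k : 'I_n) : C :=
  if inU x then c x (fl x k) / ctv x k else conjc (c (fl x k) x / ctv (fl x k) k).

Lemma unit_div (z w : C) : w != 0 -> z * conjc z = w * conjc w -> (z / w) * conjc (z / w) = 1.
Proof.
move=> hw E; rewrite conjcM conjc_inv mulrACA -invfM -E divff //.
by rewrite E mulf_neq0 // conjc_eq0.
Qed.

Lemma g_unit (x : vert) k : g x k * conjc (g x k) = 1.
Proof.
have H (y : vert) : inU y -> c y (fl y k) / ctv y k * conjc (c y (fl y k) / ctv y k) = 1.
  by move=> hy; apply: unit_div; [exact: ct_nz | rewrite /ctv ct_norm].
rewrite /g; case hx: (inU x); first exact: H.
rewrite conjcK mulrC; have := H (fl x k); rewrite flK inU_fl hx; apply; done.
Qed.

Lemma g_fl (x : vert) k : g (fl x k) k = conjc (g x k).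
Proof. by rewrite /g inU_fl flK; case: (inU x) => //=; rewrite conjcK. Qed.

Lemma g_faceU (x : vert) (k l : 'I_n) : inU x -> k != l ->
  g x k * g (fl x k) l = g x l * g (fl x l) k.
Proof.
move=> hx hkl.
have hi2 : inU (fl (fl x k) l) by rewrite !inU_fl negbK.
have E1 := R1 hx hkl; have E2 := ct_face hx hkl.
rewrite /g hx !inU_fl hx /= [fl (fl x l) k]flC !conjcM !conjc_inv.
rewrite /ctv !ct_conj //.
move: E1 E2; rewrite [fl (fl (fl x k) l) l]flK [fl (fl (fl x k) l) k]flC flK.
set a := c x (fl x k); set b := c (fl (fl x k) l) (fl x k).
set d := c x (fl x l); set e := c (fl (fl x k) l) (fl x l).
set aT := c_t tt x (fl x k); set bT := c_t tt (fl (fl x k) l) (fl x k).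
set dT := c_t tt x (fl x l); set eT := c_t tt (fl (fl x k) l) (fl x l).
move=> /eqP; rewrite addr_eq0 => /eqP E1 /eqP; rewrite addr_eq0 => /eqP E2.
rewrite mulrACA -invfM [RHS]mulrACA -invfM E1 E2 invrN mulrNN //.
Qed.

Lemma g_face (x : vert) (k l : 'I_n) : k != l ->
  g x k * g (fl x k) l = g x l * g (fl x l) k.
Proof.
move=> hkl; case hx: (inU x); first exact: g_faceU.
have hy : inU (fl x k) by rewrite inU_fl hx.
have := g_faceU hy hkl; rewrite flK g_fl [fl (fl x k) l]flC g_fl => H.
rewrite -[LHS]mulr1 -(g_unit (fl x l) k) -[RHS]mul1r -(g_unit x k).
have -> : g x k * conjc (g x k) * (g x l * g (fl x l) k) =
  g x k * (conjc (g x k) * g x l) * g (fl x l) k by ring.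
rewrite H; ring.
Qed.

Definition Vn (z : nat) : vert := insubd (v0 n) z.
Definition Kn (j : nat) : 'I_n := insubd k0 j.
Definition gN (z j : nat) : C := g (Vn z) (Kn j).
Definition PP (m x : nat) : C := \prod_(0 <= j < m) (if bb x j then gN (x %% 2 ^ j) j else 1).

Lemma Vn_val (x : vert) : Vn x = x.
Proof. exact: valKd. Qed.

Lemma Kn_val (k : 'I_n) : Kn k = k.
Proof. exact: valKd. Qed.

Lemma val_Kn j : (j < n)%N -> (Kn j : nat) = j.
Proof. by move=> hj; rewrite val_insubd hj. Qed.

Lemma Vn_flip z j : (z < 2 ^ n)%N -> (j < n)%N -> Vn (flip z j) = fl (Vn z) (Kn j).
Proof.
move=> hz hj; apply: val_inj; rewrite /= !val_insubd hz hj.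
by rewrite (flip_lt hz hj).
Qed.

Lemma gN_unit z k : (z < 2 ^ n)%N -> (k < n)%N -> gN z k * gN (flip z k) k = 1.
Proof. by move=> hz hk; rewrite /gN Vn_flip // g_fl g_unit. Qed.

Lemma gN_face z k m : (z < 2 ^ n)%N -> (k < n)%N -> (m < n)%N -> k != m ->
  gN z k * gN (flip z k) m = gN z m * gN (flip z m) k.
Proof.
move=> hz hk hm hkm; rewrite /gN !Vn_flip //; apply: g_face.
by rewrite -(inj_eq val_inj) /= !val_Kn.
Qed.

Lemma PP_flip x k : (x < 2 ^ n)%N -> (k < n)%N -> forall m, (m <= n)%N ->
  PP m (flip x k) = PP m x * (if (m <= k)%N then 1 else gN (x %% 2 ^ m) k).
Proof.
move=> hx hk; elim=> [_|m IH hm]; first by rewrite /PP !big_geq // mulr1.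
rewrite /PP !big_nat_recr //= -/(PP m (flip x k)) -/(PP m x) IH ?(ltnW hm) //.
have hz : (x %% 2 ^ m < 2 ^ n)%N by apply: leq_ltn_trans (leq_mod _ _) hx.
case: (ltngtP m k) => hmk.
- by rewrite bb_flip (ltn_eqF hmk) addbF mod_flip_le ?(ltnW hmk) // !mulr1.
- rewrite bb_flip (gtn_eqF hmk) addbF mod_flip_gt //.
  case hb: (bb x m); last by rewrite mod_step0 ?hb // !mulr1.
  rewrite mod_step1 // -!mulrA gN_face //.
  by rewrite neq_ltn hmk.
- rewrite hmk in hz *; rewrite bb_flip eqxx mod_flip_le //.
  case hb: (bb x k) => /=; last by rewrite mod_step0 ?hb // mul1r.
  by rewrite mod_step1 // -[RHS]mulrA gN_unit // !mulr1.
Qed.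

Lemma PP_fl (x : vert) (k : 'I_n) : PP n (fl x k) = PP n x * g x k.
Proof.
rewrite /= PP_flip // leqNgt ltn_ord /= modn_small //.
by rewrite /gN Vn_val Kn_val.
Qed.

Lemma PP_unit m x : PP m x * conjc (PP m x) = 1.
Proof.
rewrite /PP rmorph_prod -big_split big1 // => j _.
case: ifP => _; first exact: g_unit.
by rewrite /= oppr0 mul1r.
Qed.

Lemma core_phase : exists psi : vert -> C, (forall x, psi x * conjc (psi x) = 1) /\
  forall (i : vert) k, inU i -> psi i * c i (fl i k) = psi (fl i k) * c_t tt i (fl i k).
Proof.
exists (fun x => PP n x); split => [x|i k hi]; first exact: PP_unit.
rewrite PP_fl /g hi /ctv -mulrA divfK //; exact: ct_nz.
Qed.


Definition MX (A B : {set vert}) (F : vert -> vert -> C) : 'M[C]_(#|A|, #|B|) :=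
  \matrix_(a, b) F (enum_val a) (enum_val b).

Lemma mul_MX (A B D : {set vert}) F G :
  MX A B F *m MX B D G = MX A D (fun y z => \sum_(w in B) F y w * G w z).
Proof.
apply/matrixP => a b; rewrite !mxE [RHS]big_enum_val /=.
by apply: eq_bigr => j _; rewrite !mxE.
Qed.

Lemma adj_MX (A B : {set vert}) F : adjmx (MX A B F) = MX B A (fun y z => conjc (F z y)).
Proof. by apply/matrixP => a b; rewrite !mxE. Qed.

Lemma one_MX (A : {set vert}) : 1%:M = MX A A (fun y z => (y == z)%:R).
Proof. by apply/matrixP => a b; rewrite !mxE (inj_eq enum_val_inj). Qed.

Lemma eq_MX (A B : {set vert}) F G : (forall y z, y \in A -> z \in B -> F y z = G y z) ->
  MX A B F = MX A B G.
Proof. by move=> H; apply/matrixP => a b; rewrite !mxE H // enum_valP. Qed.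

Lemma sum_delta (B : {set vert}) y (H : vert -> C) : y \in B ->
  (forall w, w != y -> H w = 0) -> \sum_(w in B) H w = H y.
Proof.
move=> hy h0; rewrite (bigD1 y) //= big1 ?addr0 // => w /andP [_ hw]; exact: h0.
Qed.

Lemma rho_c_MX x : rho_c c x = MX (Uc c) (Uc c) (fun y z =>
  if x \in Uc c then ((y == x) && (z == x))%:R
  else if x \in Vc c then cext c y x * conjc (cext c z x) else 0).
Proof.
rewrite /rho_c /Emx; case: ifP => hx; first by apply/matrixP => a b; rewrite !mxE.
by case: ifP => hx'; apply/matrixP => a b; rewrite !mxE.
Qed.

Lemma rho_t_MX x : rho_t tt x = MX (Uset n) (Uset n) (fun y z =>
  if x \in Uset n then ((y == x) && (z == x))%:R
  else c_t tt y x * conjc (c_t tt z x)).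
Proof.
rewrite /rho_t /Emx; case: ifP => hx; by apply/matrixP => a b; rewrite !mxE.
Qed.

Lemma final : exists t, inDelta t /\ unitarily_equiv (rho_c c) (rho_t t).
Proof.
case: core_phase => psi [hu hpsi].
have key (y x : vert) : inU y -> psi y * cext c y x = psi x * c_t tt y x.
  move=> hy; rewrite /cext /c_t; case he: (edge y x); last by rewrite !mulr0.
  case: (edgeP he) => _ [k E]; rewrite E.
  by have := hpsi y k hy; rewrite /c_t edge_fl hy.
exists tt; split.
  by split; [move=> k; rewrite /tt sqr_ge0 | exact: sum_t].
pose F := fun y z : vert => (y == z)%:R * psi y.
exists (MX (Uset n) (Uc c) F).
have hUc y : (y \in Uc c) = (y \in Uset n) by rewrite UcE.
have F0 y z : z != y -> F z y = 0 by move=> h; rewrite /F (negbTE h) mul0r.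
have F0' y z : z != y -> F y z = 0 by move=> h; rewrite /F eq_sym (negbTE h) mul0r.
split; [|split].
- rewrite adj_MX mul_MX (one_MX (Uset n)); apply: eq_MX => y z hy hz.
  rewrite (@sum_delta _ y) ?hUc // => [|w hw]; last by rewrite (F0' _ _ hw) mul0r.
  rewrite /F eqxx mul1r conjcM conjc_nat eq_sym; case: eqP => [->|_].
    by rewrite mul1r hu.
  by rewrite mul0r mulr0.
- rewrite adj_MX mul_MX (one_MX (Uc c)); apply: eq_MX => y z hy hz.
  rewrite (@sum_delta _ y) -?hUc // => [|w hw]; last by rewrite (F0 _ _ hw) conjc0 mul0r.
  rewrite /F eqxx mul1r; case: eqP => [->|_].
    by rewrite mul1r mulrC hu.
  by rewrite mul0r mulr0.
- move=> x; rewrite rho_c_MX rho_t_MX adj_MX !mul_MX; apply: eq_MX => y z hy hz.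
  rewrite (@sum_delta _ z) ?hUc // => [|w hw]; last by rewrite (F0' _ _ hw) conjc0 mulr0.
  rewrite (@sum_delta _ y) ?hUc // => [|w hw]; last by rewrite (F0' _ _ hw) mul0r.
  rewrite /F !eqxx !mul1r VcE !inE.
  move: hy hz; rewrite !inE => hy hz.
  case hx: (inU x) => /=.
    case: (y =P x) => [->|_]; case: (z =P x) => [->|_] /=;
      by rewrite ?mulr1 ?mul1r ?hu ?mulr0 ?mul0r.
  rewrite inVE hx /=.
  transitivity ((psi y * cext c y x) * conjc (psi z * cext c z x)).
    by rewrite conjcM; ring.
  by rewrite !key // conjcM mulrACA hu mul1r.
Qed.

End Core.

Unset Implicit Arguments.
Local Open Scope ring_scope.

Theorem lemma5p2 (R : realType) (n : nat) (hn : (1 <= n)%N)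
  (c : 'I_(2 ^ n) -> 'I_(2 ^ n) -> R[i])
  (hadm : admissible c)
  (hnz : forall i j : 'I_(2 ^ n), edge i j -> c i j != 0) :
  exists t : 'I_n -> R, inDelta t /\ unitarily_equiv (rho_c c) (rho_t t).
Proof. exact: final. Qed.
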